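(* Let $f:\mathbb{R}^d\to\mathbb{R}$ be convex and differentiable with $L$-Lipschitz gradient and a minimizer $x^*$. For $x\in\mathbb{R}^d$ let $\phi_x(\lambda)=f(x-\lambda\nabla f(x))$. Let $x_1=y_1\in\mathbb{R}^d$, $\lambda_0\ge1/(3L)$, $\beta_1=1$, $\beta_{k+1}=\frac{1+\sqrt{1+4\beta_k^2}}{2}$, and for $k\ge1$: $\lambda_k=\max\{\lambda\in(0,\lambda_{k-1}]:\ \phi_{x_k}(2\lambda)\le\phi_{x_k}(\lambda)+\tfrac{\lambda}{2}\phi_{x_k}'(0)\}$, $y_{k+1}=x_k-\lambda_k\nabla f(x_k)$, $x_{k+1}=y_{k+1}+\frac{\beta_k-1}{\beta_{k+1}}(y_{k+1}-y_k)$. Then $\lambda_k\ge1/(3L)$ for all $k\ge1$, and there is a constant $D'$ depending only on $x_1$, $x^*$, $L$ such that $f(y_{k+1})-f(x^* )\le D'/k^2$ for all $k\ge1$.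
   Context: $\mathbb{R}^d$ carries the standard inner product and Euclidean norm $\|\cdot\|$; $\phi_x'(0)=-\|\nabla f(x)\|^2$ denotes the derivative of $\phi_x$ at $0$. This is the case $h\equiv0$ of the accelerated composite scheme, where the gradient mapping reduces to $\nabla f$. *)

(* Defs.v *)
From HB Require Import structures.
From mathcomp Require Import all_boot all_order all_algebra.
From mathcomp Require Import all_classical all_reals all_analysis.
Set Implicit Arguments. Unset Strict Implicit. Unset Printing Implicit Defensive.
Import Order.TTheory GRing.Theory Num.Theory.
Import numFieldNormedType.Exports.
Local Open Scope ring_scope.

(* Standard inner product and Euclidean norm on R^d = 'rV[R]_d
   (the library's norm on matrices is the max norm, so we define these). *)
Definition dotv {R : realType} {d : nat} (u v : 'rV[R]_d) : R :=
  \sum_(i < d) u ord0 i * v ord0 i.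

Definition enorm {R : realType} {d : nat} (u : 'rV[R]_d) : R :=
  Num.sqrt (dotv u u).

Definition is_gradient {R : realType} {d : nat}
  (f : 'rV[R]_d -> R) (g : 'rV[R]_d -> 'rV[R]_d) : Prop :=
  forall x : 'rV[R]_d, differentiable f x /\
    forall v : 'rV[R]_d, 'D_v f x = dotv (g x) v.

Definition convex_fun {R : realType} {d : nat} (f : 'rV[R]_d -> R) : Prop :=
  forall (x y : 'rV[R]_d) (t : R), 0 <= t <= 1 ->
    f (t *: x + (1 - t) *: y) <= t * f x + (1 - t) * f y.

Definition phi {R : realType} {d : nat}
  (f : 'rV[R]_d -> R) (g : 'rV[R]_d -> 'rV[R]_d) (x : 'rV[R]_d) (l : R) : R :=
  f (x - l *: g x).

(* phi_x'(0) = - ||grad f(x)||^2 *)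
Definition dphi0 {R : realType} {d : nat}
  (g : 'rV[R]_d -> 'rV[R]_d) (x : 'rV[R]_d) : R := - (enorm (g x)) ^+ 2.

Definition ls_cond {R : realType} {d : nat}
  (f : 'rV[R]_d -> R) (g : 'rV[R]_d -> 'rV[R]_d) (x : 'rV[R]_d) (l : R) : Prop :=
  phi f g x (2 * l) <= phi f g x l + l / 2 * dphi0 g x.

Definition is_max_step {R : realType} {d : nat}
  (f : 'rV[R]_d -> R) (g : 'rV[R]_d -> 'rV[R]_d) (x : 'rV[R]_d) (b m : R) : Prop :=
  (0 < m <= b /\ ls_cond f g x m) /\
  forall l : R, 0 < l <= b -> ls_cond f g x l -> l <= m.

(* Main.v *)
Require Import Defs.
From HB Require Import structures.
From mathcomp Require Import all_boot all_order all_algebra.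
From mathcomp Require Import all_classical all_reals all_analysis.
From mathcomp Require Import lra ring.
Import Order.TTheory GRing.Theory Num.Theory.
Import numFieldNormedType.Exports.
Local Open Scope ring_scope.
Set Implicit Arguments. Unset Strict Implicit.

Lemma grad_ineq (R : realType) (d : nat) (f : 'rV[R]_d -> R) g x y :
  convex_fun f -> is_gradient f g -> f x + dotv (g x) (y - x) <= f y.
Proof.
move=> cf hg; have [dx Dg] := hg x.
have cv := @diff_derivable _ _ _ f x (y - x) dx.
rewrite -(Dg (y - x)) addrC -lerBrDr.
apply: (cvgr_to_le (cvg_dnbhs_at_right cv)).
near=> h.
have h0 : 0 < h by near: h; exact: nbhs_right_gt.
have h1 : h <= 1 by near: h; exact: nbhs_right_le.
rewrite /= -[h *: (y - x) + x]/(h *: (y - x) + x).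
have -> : h *: (y - x) + x = h *: y + (1 - h) *: x.
  by rewrite scalerBr scalerBl scale1r addrA addrAC.
have hc := cf y x h (andb_true_intro (conj (ltW h0) h1)).

have -> : h^-1 *: (f (h *: y + (1 - h) *: x) - f x) = (f (h *: y + (1 - h) *: x) - f x) / h by rewrite mulrC.
rewrite ler_pdivrMr //. nra.
Unshelve. all: by end_near. Qed.

Section Dot.
Variables (R : realType) (d : nat).
Implicit Types (u v w : 'rV[R]_d).

Lemma dotvC u v : dotv u v = dotv v u.
Proof. by apply: eq_bigr => i _; rewrite mulrC. Qed.

Lemma dotvDl u v w : dotv (u + v) w = dotv u w + dotv v w.
Proof. by rewrite /dotv -big_split; apply: eq_bigr => i _; rewrite mxE mulrDl. Qed.

Lemma dotvZl a u v : dotv (a *: u) v = a * dotv u v.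
Proof. by rewrite /dotv mulr_sumr; apply: eq_bigr => i _; rewrite mxE mulrA. Qed.

Lemma dotvNl u v : dotv (- u) v = - dotv u v.
Proof. by rewrite -scaleN1r dotvZl mulN1r. Qed.

Lemma dotvBl u v w : dotv (u - v) w = dotv u w - dotv v w.
Proof. by rewrite dotvDl dotvNl. Qed.

Lemma dotvDr u v w : dotv w (u + v) = dotv w u + dotv w v.
Proof. by rewrite dotvC dotvDl !(dotvC w). Qed.

Lemma dotvZr a u v : dotv v (a *: u) = a * dotv v u.
Proof. by rewrite dotvC dotvZl dotvC. Qed.

Lemma dotvNr u v : dotv v (- u) = - dotv v u.
Proof. by rewrite dotvC dotvNl dotvC. Qed.

Lemma dotvBr u v w : dotv w (u - v) = dotv w u - dotv w v.
Proof. by rewrite dotvDr dotvNr. Qed.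

Lemma dotvv_ge0 u : 0 <= dotv u u.
Proof. by apply: sumr_ge0 => i _; rewrite -expr2 sqr_ge0. Qed.

Lemma dotvv_eq0 u v : dotv u u = 0 -> dotv u v = 0.
Proof.
move=> /eqP; rewrite psumr_eq0; last by move=> i _; rewrite -expr2 sqr_ge0.
move=> /allP H; apply: big1 => i _.
have /implyP := H i (mem_index_enum _).
by move=> /(_ isT); rewrite mulf_eq0 orbb => /eqP ->; rewrite mul0r.
Qed.

Lemma enorm_sq u : enorm u ^+ 2 = dotv u u.
Proof. by rewrite /enorm sqr_sqrtr // dotvv_ge0. Qed.

Lemma enorm_ge0 u : 0 <= enorm u.
Proof. exact: sqrtr_ge0. Qed.

Lemma CS_sq u v : dotv u v ^+ 2 <= dotv u u * dotv v v.
Proof.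
have := dotvv_ge0 (dotv v v *: u - dotv u v *: v).
rewrite !(dotvBl, dotvBr, dotvZl, dotvZr) (dotvC v u).
have := dotvv_ge0 v; rewrite le0r => /orP [/eqP B0 _|Bp H].
  by rewrite dotvC (@dotvv_eq0 v u B0) B0 expr0n mulr0.
nra.
Qed.

Lemma CS u v : dotv u v <= enorm u * enorm v.
Proof.
rewrite /enorm -sqrtrM ?dotvv_ge0 //.
have [h|h] := lerP (dotv u v) 0.
  by apply: le_trans h (sqrtr_ge0 _).
by rewrite -[dotv u v]gtr0_norm // -sqrtr_sqr ler_sqrt ?CS_sq // mulr_ge0 ?dotvv_ge0.
Qed.
End Dot.

Section P1.
Variables (R : realType) (d : nat) (f : 'rV[R]_d -> R) (g : 'rV[R]_d -> 'rV[R]_d) (L : R).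
Hypotheses (cf : convex_fun f) (hg : is_gradient f g) (L0 : 0 < L)
  (Lip : forall u v, enorm (g u - g v) <= L * enorm (u - v)).

Lemma enormZ (s : R) (u : 'rV[R]_d) : 0 <= s -> enorm (s *: u) = s * enorm u.
Proof.
move=> s0; rewrite /enorm dotvZl dotvZr mulrA -expr2 sqrtrM ?sqr_ge0 //.
by rewrite sqrtr_sqr ger0_norm.
Qed.

Variable x : 'rV[R]_d.
Let G := g x.
Let c := dotv G G.
Let p (t : R) := x - t *: G.
Let h (t : R) := f (p t) + c * t - c * L * t ^+ 2 / 2.

Lemma stepa t s : 0 <= t <= s -> f (p s) - f (p t) <= - (s - t) * (c - L * s * c).
Proof.
move=> /andP [t0 ts].
have s0 : 0 <= s by apply: le_trans ts.
have gi := @grad_ineq R d f g (p s) (p t) cf hg.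
have e1 : p t - p s = (s - t) *: G by apply/rowP => i; rewrite /p !mxE; ring.
rewrite e1 in gi.
have hn := enorm_sq G.
have hcs := CS (G - g (p s)) G.
have hl := Lip x (p s).
have e2 : x - p s = s *: G by apply/rowP => i; rewrite /p !mxE; ring.
rewrite e2 enormZ // in hl.
have ha : dotv (g (p s)) G = c - dotv (G - g (p s)) G by rewrite dotvBl /c; ring.
rewrite dotvZr ha in gi.
have e0 := enorm_ge0 (G - g (p s)).
have n0 := enorm_ge0 G.
have hb : dotv (G - g (p s)) G <= L * s * c.
  rewrite /c -hn; apply: le_trans hcs _.
  rewrite expr2 mulrA ler_wpM2r //.
  by rewrite -mulrA; exact: hl.
have q1 : 0 <= s - t by rewrite subr_ge0.
have q2 : 0 <= L * s * c - dotv (G - g (p s)) G by rewrite subr_ge0.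
have := mulr_ge0 q1 q2.
nra.
Qed.

Lemma stepb t s : 0 <= t <= s -> h s - h t <= c * L / 2 * (s - t) ^+ 2.
Proof.
move=> hts; have := stepa hts; rewrite /h => H.
have E : c * L / 2 * (s - t) ^+ 2 = (s - t) * L * s * c + (- (s - t) * c)
   + c * s - c * L * s ^+ 2 / 2 - (c * t - c * L * t ^+ 2 / 2) by field.
rewrite E. lra.
Qed.


Lemma stepc t dl n : 0 <= t -> 0 <= dl ->
  h (t + n%:R * dl) - h t <= n%:R * (c * L / 2 * dl ^+ 2).
Proof.
move=> t0 d0; elim: n => [|n IH]; first by rewrite !mul0r addr0 subrr.
have a0 : 0 <= t + n%:R * dl by rewrite addr_ge0 // mulr_ge0.
have := @stepb (t + n%:R * dl) (t + n%:R * dl + dl).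
rewrite a0 lerDl d0 => /(_ isT).
have -> : t + n%:R * dl + dl - (t + n%:R * dl) = dl by ring.
have -> : t + n%:R * dl + dl = t + n.+1%:R * dl by rewrite -natr1; ring.
rewrite -natr1; lra.
Qed.

Lemma hmono t s : 0 <= t <= s -> h s <= h t.
Proof.
move=> /andP [t0 ts].
rewrite -subr_le0 leNgt; apply/negP => D0.
set D := h s - h t in D0.
set M := c * L / 2 * (s - t) ^+ 2.
set n := (Num.truncn (M / D)).+1.
have n0 : 0 < n%:R :> R by rewrite ltr0n.
have hn : M / D < n%:R by exact: truncnS_gt.
have := @stepc t ((s - t) / n%:R) n t0.
have dd : 0 <= (s - t) / n%:R by rewrite divr_ge0 ?subr_ge0 // ltW.
move=> /(_ dd).
have -> : t + n%:R * ((s - t) / n%:R) = s by field; rewrite lt0r_neq0.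
rewrite -/D.
have -> : n%:R * (c * L / 2 * ((s - t) / n%:R) ^+ 2) = M / n%:R.
  by rewrite /M; field; rewrite lt0r_neq0.
rewrite ler_pdivlMr // => H.
move: hn; rewrite ltr_pdivrMr // mulrC; lra.
Qed.

Lemma ls_third : ls_cond f g x (1 / (3 * L)).
Proof.
set l := 1 / (3 * L).
have l0 : 0 <= l by rewrite divr_ge0 // mulr_ge0 // ltW.
have lp : 0 < l by rewrite divr_gt0 // mulr_gt0.
have := @hmono l (2 * l); rewrite l0 /= ler_pMl ?ler1n // => /(_ isT).
rewrite /h /ls_cond /phi /dphi0 -/G -/(p _) -/(p (2 * l)) enorm_sq -/c.
have hL : L * l = 1 / 3 by rewrite /l; field; rewrite lt0r_neq0.
have e1 : c * L * (2 * l) ^+ 2 / 2 = 2 * (c * l) * (L * l) by field.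
have e2 : c * L * l ^+ 2 / 2 = (c * l) * (L * l) / 2 by ring.
rewrite e1 e2 hL /p; lra.
Qed.
End P1.


Lemma KL (R : realType) (d : nat) (f : 'rV[R]_d -> R) g x l z :
  convex_fun f -> is_gradient f g -> ls_cond f g x l ->
  f (x - l *: g x) <= f z + dotv (g x) (x - z) - l / 2 * dotv (g x) (g x).
Proof.
move=> cf hg.
rewrite /ls_cond /phi /dphi0 enorm_sq => hl.
have hc := cf (x - (2 * l) *: g x) x (1 / 2).
have e : 1 / 2 *: (x - (2 * l) *: g x) + (1 - 1 / 2) *: x = x - l *: g x.
  by apply/rowP => i; rewrite !mxE; field.
rewrite e in hc.
have h12 : (0 <= (1 / 2 : R)) && ((1 / 2 : R) <= 1).
  by apply/andP; split; lra.

have := hc h12.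
have gi := @grad_ineq R d f g x z cf hg.
have e2 : dotv (g x) (z - x) = - dotv (g x) (x - z) by rewrite dotvBr dotvBr; ring.
rewrite e2 in gi.
lra.
Qed.



Lemma beta_step (R : realType) (t : R) : 0 <= t ->
  let t' := (1 + Num.sqrt (1 + 4 * t ^+ 2)) / 2 in
  t' ^+ 2 - t' = t ^+ 2 /\ t + 1 / 2 <= t'.
Proof.
move=> t0 t'; have s0 : 0 <= 1 + 4 * t ^+ 2 by rewrite addr_ge0 // mulr_ge0 // sqr_ge0.
have hs := sqr_sqrtr s0.
have h2 : 2 * t <= Num.sqrt (1 + 4 * t ^+ 2).
  rewrite -[2 * t]ger0_norm ?mulr_ge0 // -sqrtr_sqr ler_sqrt //.
  rewrite exprMn; lra.
rewrite /t'; move: hs h2; set s := Num.sqrt _ => hs h2.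
split; last by lra.
have -> : ((1 + s) / 2) ^+ 2 - (1 + s) / 2 = (s ^+ 2 - 1) / 4 by field.
by rewrite hs; field.
Qed.

Unset Implicit Arguments.

Lemma nsq_sub (R : realType) (d : nat) (a G : 'rV[R]_d) (b : R) :
  dotv (a - b *: G) (a - b *: G) = dotv a a - 2 * b * dotv G a + b ^+ 2 * dotv G G.
Proof. rewrite !(dotvBl, dotvBr, dotvZl, dotvZr) (dotvC a G); ring. Qed.

Theorem corollary3p2 (R : realType) (d : nat) :
  exists D' : 'rV[R]_d -> 'rV[R]_d -> R -> R,
  forall (f : 'rV[R]_d -> R) (g : 'rV[R]_d -> 'rV[R]_d) (L : R) (xs : 'rV[R]_d)
         (x y : nat -> 'rV[R]_d) (lam beta : nat -> R),
    convex_fun f ->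
    is_gradient f g ->
    0 < L ->
    (forall u v, enorm (g u - g v) <= L * enorm (u - v)) ->
    (forall u, f xs <= f u) ->
    x 1%N = y 1%N ->
    1 / (3 * L) <= lam 0%N ->
    beta 1%N = 1 ->
    (forall k, (1 <= k)%N ->
       beta k.+1 = (1 + Num.sqrt (1 + 4 * beta k ^+ 2)) / 2) ->
    (forall k, (1 <= k)%N -> is_max_step f g (x k) (lam k.-1) (lam k)) ->
    (forall k, (1 <= k)%N -> y k.+1 = x k - lam k *: g (x k)) ->
    (forall k, (1 <= k)%N ->
       x k.+1 = y k.+1 + ((beta k - 1) / beta k.+1) *: (y k.+1 - y k)) ->
    (forall k, (1 <= k)%N -> 1 / (3 * L) <= lam k) /\
    (forall k, (1 <= k)%N -> f (y k.+1) - f xs <= D' (x 1%N) xs L / (k%:R ^+ 2)).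
Proof.
exists (fun x1 xs L => 6 * L * dotv (x1 - xs) (x1 - xs)).
move=> f g L xs x y lam beta cf hg L0 Lip hmin x1y1 lam0 b1 brec hmax hy hx.
have ls3 := ls_third cf hg L0 Lip.
have l3p : 0 < 1 / (3 * L) by rewrite divr_gt0 // mulr_gt0.
have P1 : forall k, (1 <= k)%N -> 1 / (3 * L) <= lam k.
  elim=> [//|k IH] _.
  have hb : 1 / (3 * L) <= lam k.
    by case: k IH => [_|k IH]; [exact: lam0 | exact: IH].
  have [_ hm] := hmax k.+1 isT.
  apply: hm; last exact: ls3.
  by rewrite l3p hb.
split => //.
have lpos : forall k, (1 <= k)%N -> 0 < lam k.
  by move=> k /hmax [[/andP [] ]].
have ldec : forall k, (1 <= k)%N -> lam k.+1 <= lam k.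
  by move=> k _; have [[/andP [_ ]]] := hmax k.+1 isT.
have lsk : forall k, (1 <= k)%N -> ls_cond f g (x k) (lam k).
  by move=> k /hmax [[]].
have bfacts : forall k, (1 <= k)%N -> 1 <= beta k /\ (k%:R + 1) / 2 <= beta k.
  elim=> [//|k IH] _.
  case: k IH => [_|k IH]; first by rewrite b1; split; lra.
  have [hb1 hb2] := IH isT.
  rewrite brec //.
  have [_ h] := beta_step (le_trans ler01 hb1).
  rewrite -[k.+2]addn1 natrD; split; lra.
have bsq : forall k, (1 <= k)%N -> beta k.+1 ^+ 2 - beta k.+1 = beta k ^+ 2.
  move=> k k1; have [hb1 _] := bfacts k k1.
  by rewrite brec //; have [] := beta_step (le_trans ler01 hb1).
set u := fun k => beta k *: y k.+1 - (beta k - 1) *: y k - xs.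
set E := fun k => 2 * lam k * beta k ^+ 2 * (f (y k.+1) - f xs) + dotv (u k) (u k).
set N := dotv (x 1%N - xs) (x 1%N - xs).
have Eb : forall k, (1 <= k)%N -> E k <= N.
  elim=> [//|k IH] _.
  case: k IH => [_|k IH].
    have kl := KL xs cf hg (lsk 1%N isT).
    rewrite -hy // in kl.
    have e1 : u 1%N = (x 1%N - xs) - lam 1%N *: g (x 1%N).
      by apply/rowP => i; rewrite /u b1 hy // !mxE; ring.
    rewrite /E e1 b1 /N nsq_sub.
    have lp := lpos 1%N isT.
    set a := dotv (g (x 1%N)) (x 1%N - xs) in kl *.
    set c := dotv (g (x 1%N)) (g (x 1%N)) in kl *.
    set dl := f (y 2) - f xs.
    have kl' : dl <= a - lam 1%N / 2 * c by rewrite /dl; lra.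
    have := ler_wpM2l (ltW lp) kl'.
    nra.
  apply: le_trans (IH isT).
  have hk1 : (1 <= k.+2)%N by [].
  set X := x k.+2.
  set G := g X.
  set t := beta k.+2.
  set tk := beta k.+1.
  set l := lam k.+2.
  have [t1 _] := bfacts k.+2 isT.
  have t0 : t != 0 by rewrite /t; apply/negP => /eqP e; rewrite e in t1; lra.
  have tsq : t ^+ 2 - t = tk ^+ 2 by exact: bsq.
  have lp : 0 < l by exact: lpos.
  have ld : l <= lam k.+1 by exact: ldec.
  have d0 : 0 <= f (y k.+2) - f xs by rewrite subr_ge0.
  have ki := KL (y k.+2) cf hg (lsk k.+2 isT).
  have kii := KL xs cf hg (lsk k.+2 isT).
  rewrite -hy // -/X -/G -/l in ki kii.
  have V1 : (t - 1) *: (X - y k.+2) + (X - xs) = u k.+1.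
    by apply/rowP => i; rewrite /u /X hx // !mxE -/t -/tk; field.
  have V2 : u k.+2 = u k.+1 - (t * l) *: G.
    rewrite -V1; apply/rowP => i; rewrite /u hy // -/X -/G -/l !mxE -/t; ring.
  have ha : dotv G (u k.+1) = (t - 1) * dotv G (X - y k.+2) + dotv G (X - xs).
    by rewrite -V1 [LHS]dotvDr dotvZr.
  rewrite /E V2 nsq_sub -/t -/tk -/l ha.
  set c := dotv G G in ki kii *.
  set a1 := dotv G (X - y k.+2) in ki kii *.
  set a2 := dotv G (X - xs) in ki kii *.
  set U := dotv (u k.+1) (u k.+1).
  set d3 := f (y k.+3) - f xs.
  set d2 := f (y k.+2) - f xs.
  have i' : d3 <= d2 + a1 - l / 2 * c by rewrite /d3 /d2; lra.
  have ii' : d3 <= a2 - l / 2 * c by rewrite /d3; lra.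
  have p1 : 0 <= (t - 1) * (d2 + a1 - l / 2 * c - d3) by rewrite mulr_ge0 // subr_ge0.
  have S : t * d3 <= (t - 1) * d2 + ((t - 1) * a1 + a2) - t * l * c / 2 by nra.
  have p2 : 0 <= (2 * l * t) * ((t - 1) * d2 + ((t - 1) * a1 + a2) - t * l * c / 2 - t * d3).
    apply: mulr_ge0; last by rewrite subr_ge0; exact: S.
    apply: mulr_ge0; last exact: le_trans ler01 t1.
    by apply: mulr_ge0 => //; exact: ltW.
  have p3 : 0 <= (lam k.+1 - l) * (tk ^+ 2 * d2).
    by apply: mulr_ge0; [rewrite subr_ge0 | apply: mulr_ge0; rewrite // sqr_ge0].
  have e3 : tk ^+ 2 = t ^+ 2 - t by rewrite tsq.
  rewrite e3 in p3 *.
  nra.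
move=> k k1.
have Ek := Eb k k1.
rewrite /E in Ek.
have U0 : 0 <= dotv (u k) (u k) by exact: dotvv_ge0.
have [b1k b2k] := bfacts k k1.
have lk := P1 k k1.
have d0 : 0 <= f (y k.+1) - f xs by rewrite subr_ge0.
have kp : 0 < k%:R :> R by rewrite ltr0n.
rewrite ler_pdivlMr ?exprn_gt0 //.
set l3 := 1 / (3 * L) in l3p lk.
have hl3 : 6 * L * l3 = 2 by rewrite /l3; field; rewrite lt0r_neq0.
set dl := f (y k.+1) - f xs in d0 Ek *.
set bk := beta k in b1k b2k Ek.
set lk' := lam k in lk Ek.
have hb : k%:R ^+ 2 <= 4 * bk ^+ 2 by nra.
have h1 : l3 * (k%:R ^+ 2) * dl <= 4 * lk' * bk ^+ 2 * dl.
  apply: ler_wpM2r => //.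
  have q1 : l3 * k%:R ^+ 2 <= lk' * k%:R ^+ 2 by apply: ler_wpM2r => //; exact: sqr_ge0.
  have q2 : lk' * k%:R ^+ 2 <= lk' * (4 * bk ^+ 2) by apply: ler_wpM2l => //; exact: le_trans (ltW l3p) lk.
  lra.
have h2 : 2 * lk' * bk ^+ 2 * dl <= N by lra.
have : 6 * L * (l3 * (k%:R ^+ 2) * dl) <= 6 * L * (2 * N).
  by apply: ler_wpM2l; [rewrite mulr_ge0 // ltW | lra].
have -> : 6 * L * (l3 * (k%:R ^+ 2) * dl) = (6 * L * l3) * (dl * k%:R ^+ 2) by ring.
rewrite hl3; lra.
Qed.
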